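(* Let $m,n$ be positive integers. The set $\{B_{i,j}: i\in[m], j\in[n-1]\}\cup\{C_n\}$ is a basis for the set $\Gamma_{m,n}$ of $m\times n$ stochastic matrices, i.e., it consists of $m(n-1)+1$ linearly independent stochastic matrices whose linear span contains $\Gamma_{m,n}$.
   Context: A real $m\times n$ matrix is stochastic if its entries are nonnegative and each row sums to $1$; $\Gamma_{m,n}$ is the set of such matrices (an affine set of dimension $m(n-1)$). For $i\in[m]$, $j\in[n-1]$, $B_{i,j}$ is the $m\times n$ $(0,1)$-matrix whose $(i,j)$ entry is $1$, whose $(j+1)$-th column has all entries $1$ except the $(i,j+1)$ entry which is $0$, and all of whose other entries are $0$. $C_n$ is the $m\times n$ $(0,1)$-matrix whose $n$-th column is all $1$'s and other entries $0$. *)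

(* Defs.v *)
From HB Require Import structures.
From mathcomp Require Import all_boot all_order all_algebra.
Set Implicit Arguments. Unset Strict Implicit. Unset Printing Implicit Defensive.
Import Order.TTheory GRing.Theory Num.Theory.
Local Open Scope ring_scope.

(* Rows/columns are 0-indexed: row i : 'I_m stands for i+1 in [m],
   j : 'I_(n.-1) stands for j+1 in [n-1]; column (j+1) of the paper is
   0-indexed column j.+1, column n is 0-indexed column n.-1. *)

Definition stochastic (R : numDomainType) (m n : nat) (A : 'M[R]_(m, n)) : Prop :=
  (forall i j, 0 <= A i j) /\ (forall i, \sum_(j < n) A i j = 1).

Definition Bmx (R : nzRingType) (m n : nat) (i : 'I_m) (j : 'I_(n.-1)) : 'M[R]_(m, n) :=
  \matrix_(k < m, l < n)
    (if (l == j :> nat) && (k == i) then 1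
     else if (l == j.+1 :> nat) && (k != i) then 1 else 0).

Definition Cmx (R : nzRingType) (m n : nat) : 'M[R]_(m, n) :=
  \matrix_(k < m, l < n) (if (l == n.-1 :> nat) then 1 else 0).

Definition stoch_family (R : nzRingType) (m n : nat) : seq 'M[R]_(m, n) :=
  [seq Bmx R i j | i <- enum 'I_m, j <- enum 'I_(n.-1)] ++ [:: Cmx R m n].

(* Main.v *)
Require Import Defs.
From HB Require Import structures.
From mathcomp Require Import all_boot all_order all_algebra.
From mathcomp Require Import zify.
Import Order.TTheory GRing.Theory Num.Theory.
Local Open Scope ring_scope.

Definition colM (R : nzRingType) (m n : nat) (c : nat) : 'M[R]_(m, n) :=
  \matrix_(k < m, l < n) ((l == c :> nat)%:R).
Definition Em (R : nzRingType) {m : nat} (n : nat) (i : 'I_m) (c : nat) : 'M[R]_(m, n) :=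
  \matrix_(k < m, l < n) (((k == i) && (l == c :> nat))%:R).

Lemma Bmx_dec (R : nzRingType) m n (i : 'I_m) (j : 'I_(n.-1)) :
  Bmx R i j = Em R n i j - Em R n i j.+1 + colM R m n j.+1.
Proof.
apply/matrixP => k l; rewrite !mxE.
case: (k == i) => /=; rewrite ?andbT ?andbF /=.
  case Hj: (l == j :> nat); case Hj1: (l == j.+1 :> nat) => //=.
  all: try by rewrite /= ?mulr1n ?mulr0n ?subrK ?subr0 ?addr0 ?add0r.
  all: by case: (l == j.+1 :> nat); rewrite /= ?mulr1n ?mulr0n ?subrK ?subr0 ?addr0 ?add0r.
Qed.

Lemma sumE_col (R : nzRingType) m n (c : nat) :
  \sum_(i < m) Em R n i c = colM R m n c.
Proof.
apply/matrixP => k l; rewrite summxE mxE.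
under eq_bigr do rewrite mxE.
rewrite (bigD1 k) //= eqxx /= big1 ?addr0 // => i /negbTE.
by rewrite eq_sym => ->.
Qed.

Lemma CmxE (R : nzRingType) m n : Cmx R m n = colM R m n n.-1.
Proof. by apply/matrixP => k l; rewrite !mxE; case: (_ == _). Qed.

Lemma deltaE (R : nzRingType) m n (i : 'I_m) (l : 'I_n) :
  delta_mx i l = Em R n i l.
Proof. by apply/matrixP => k l'; rewrite !mxE. Qed.

Lemma down_ind (N : nat) (P : nat -> Prop) : P N ->
  (forall l, (l < N)%N -> P l.+1 -> P l) -> forall l, (l <= N)%N -> P l.
Proof.
move=> HN Hs.
suff H : forall d, (d <= N)%N -> P (N - d)%N.
  by move=> l hl; have := H (N - l)%N (leq_subr _ _); rewrite subKn.
elim=> [|d IH] hd; first by rewrite subn0.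
apply: Hs; first lia.
rewrite subnSK //; apply: IH; lia.
Qed.

Lemma row_sum1 (R : nzRingType) n (c : nat) : (c < n)%N ->
  \sum_(l < n) ((l == c :> nat)%:R : R) = 1.
Proof.
move=> hc; rewrite (bigD1 (Ordinal hc)) //= eqxx big1 ?addr0 // => i.
by move=> /negbTE; rewrite -val_eqE /= => ->.
Qed.

Section Main.
End Main.

Lemma col_in (R : realFieldType) m' n' l : (l <= n')%N ->
  colM R m'.+1 n'.+1 l \in <<stoch_family R m'.+1 n'.+1>>%VS.
Proof.
move: l; apply: (@down_ind n' (fun l => colM R m'.+1 n'.+1 l \in <<stoch_family R m'.+1 n'.+1>>%VS)).
  have -> : colM R m'.+1 n'.+1 n' = Cmx R m'.+1 n'.+1 by rewrite CmxE.
  by apply: memv_span; rewrite mem_cat mem_seq1 eqxx orbT.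
move=> l hl IH.
pose j : 'I_(n'.+1.-1) := Ordinal hl.
have -> : colM R m'.+1 n'.+1 l =
   (\sum_(i < m'.+1) Bmx R i j) - colM R m'.+1 n'.+1 l.+1 *+ m'.+1
     + colM R m'.+1 n'.+1 l.+1.
  under eq_bigr do rewrite Bmx_dec.
  rewrite big_split /= sumrB !sumE_col sumr_const card_ord /=.
  by rewrite addrK subrK.
rewrite memvD // memvB ?rpredMn //.
apply: memv_suml => i _; apply: memv_span.
by rewrite mem_cat allpairs_f ?mem_enum.
Qed.

Lemma ediff_in (R : realFieldType) m' n' (i : 'I_m'.+1) l : (l <= n')%N ->
  Em R n'.+1 i l - Em R n'.+1 i n' \in <<stoch_family R m'.+1 n'.+1>>%VS.
Proof.
move: l; apply: (@down_ind n' (fun l => Em R n'.+1 i l - Em R n'.+1 i n' \in <<stoch_family R m'.+1 n'.+1>>%VS)); first by rewrite subrr mem0v.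
move=> l hl IH.
pose j : 'I_(n'.+1.-1) := Ordinal hl.
have -> : Em R n'.+1 i l - Em R n'.+1 i n' =
  (Bmx R i j - colM R m'.+1 n'.+1 l.+1) + (Em R n'.+1 i l.+1 - Em R n'.+1 i n').
  by rewrite Bmx_dec addrK addrA subrK.
rewrite memvD // memvB ?col_in //.
by apply: memv_span; rewrite mem_cat allpairs_f ?mem_enum.
Qed.

Theorem mainTheorem8 (R : realFieldType) (m n : nat) (hm : (0 < m)%N) (hn : (0 < n)%N) :
  size (stoch_family R m n) = (m * n.-1).+1 /\
  (forall A, A \in stoch_family R m n -> stochastic A) /\
  free (stoch_family R m n) /\
  (forall A : 'M[R]_(m, n), stochastic A -> A \in <<stoch_family R m n>>%VS).
Proof.
case: m hm => // m' _; case: n hn => // n' _.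
set X := stoch_family R m'.+1 n'.+1.
have sizeX : size X = (m'.+1 * n').+1.
  by rewrite size_cat size_allpairs !size_enum_ord addn1.
split => //.
split.
  move=> A; rewrite mem_cat => /orP [/allpairsP [[i j] [_ _ ->]] | ].
    have HE : forall k l, Bmx R i j k l =
        ((l == (if k == i then j : nat else j.+1) :> nat)%:R).
      move=> k l; rewrite mxE; case: (k == i) => /=; rewrite ?andbT ?andbF /=;
      by case: (_ == _).
    split => [k l|k]; first by rewrite HE ler0n.
    under eq_bigr do rewrite HE.
    apply: row_sum1; case: (k == i) => //=; last exact: ltn_ord.
    by apply: (leq_trans (ltn_ord j)).
  rewrite mem_seq1 => /eqP ->; split => [k l|k].
    by rewrite mxE; case: (_ == _) => //; rewrite ler01.
  under eq_bigr do rewrite mxE.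
  by rewrite -[RHS](@row_sum1 R n'.+1 n') //;
     apply: eq_bigr => l _; case: (_ == _).
have spanA : forall A : 'M[R]_(m'.+1, n'.+1), stochastic A -> A \in <<X>>%VS.
  move=> A [_ rs].
  have eq1 : A = \sum_(i < m'.+1) \sum_(l < n'.+1)
        A i l *: (Em R n'.+1 i l - Em R n'.+1 i n') + Cmx R m'.+1 n'.+1.
    rewrite {1}(matrix_sum_delta A) CmxE -sumE_col -big_split /=.
    apply: eq_bigr => i _.
    under [X in _ = X + _]eq_bigr do rewrite scalerBr.
    rewrite sumrB -scaler_suml rs scale1r subrK.
    by apply: eq_bigr => l _; rewrite deltaE.
  rewrite eq1 memvD //; last first.
    by apply: memv_span; rewrite mem_cat mem_seq1 eqxx orbT.
  apply: memv_suml => i _; apply: memv_suml => l _.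
  by rewrite memvZ // ediff_in // -ltnS.
split => //.
(* freeness via dimension *)
set Z := [seq Em R n'.+1 (lift ord0 i) n' | i <- enum 'I_m'].
have sizeZ : size Z = m' by rewrite size_map size_enum_ord.
have XZ : (<<X>> <= <<X ++ Z>>)%VS by apply/span_subvP => x hx; apply: memv_span; rewrite mem_cat hx.
have ZZ : forall i, Em R n'.+1 (lift ord0 i) n' \in <<X ++ Z>>%VS.
  by move=> i; apply: memv_span; rewrite mem_cat; apply/orP; right; apply: (map_f (fun i => Em R n'.+1 (lift ord0 i) n')); rewrite mem_enum.
have Ein : forall i, Em R n'.+1 i n' \in <<X ++ Z>>%VS.
  move=> i; case: (eqVneq ord0 i) => [<-|/unlift_some [k -> _]]; last exact: ZZ.
  have -> : Em R n'.+1 ord0 n' =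
      Cmx R m'.+1 n'.+1 - \sum_(k < m') Em R n'.+1 (lift ord0 k) n'.
    by rewrite CmxE /= -sumE_col big_ord_recl addrK.
  rewrite memvB //; last by apply: memv_suml => k _.
  by apply: (subvP XZ); apply: memv_span; rewrite mem_cat mem_seq1 eqxx orbT.
have full : (fullv <= <<X ++ Z>>)%VS.
  apply/subvP => A _; rewrite (matrix_sum_delta A).
  apply: memv_suml => i _; apply: memv_suml => l _; apply: memvZ.
  rewrite deltaE -(subrK (Em R n'.+1 i n') (Em R n'.+1 i l)).
  rewrite memvD //; apply: (subvP XZ); apply: ediff_in; rewrite -ltnS.
  exact: ltn_ord.
have := dimvS full; rewrite dimvf dim_matrix span_cat => h1.
have h2 := (dimv_add_leqif <<X>> <<Z>>).1.
have h3 := dim_span Z; have h4 := dim_span X.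
rewrite /free sizeX; apply/eqP.
rewrite sizeZ in h3; rewrite sizeX in h4.
move: h1 h2 h3 h4; set a := \dim <<X>>; set b := \dim <<Z>>;
set c := \dim (<<X>> + <<Z>>)%VS => h1 h2 h3 h4.
nia.
Qed.
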